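(* Let $d\ge2$ and $r$ be integers with $d<r<2d$, let $a\in k$, and let $\widetilde X(d,r)\subset\mathbb{A}^3=\mathrm{Spec}\,k[x,y,z]$ be the hypersurface $x^rz+y^d+ax^d=1$ and $\widetilde V(d,r)$ the hypersurface $x^rz+y^d=1$. For $\lambda$ a $d$-th root of unity let $p_\lambda(x)\in k[x]$ be the unique polynomial of degree $\le r-1$ with $p_\lambda(0)=\lambda$ such that $x^r$ divides $1-p_\lambda(x)^d-ax^d$. Then: (1) $p_\lambda(x)=\lambda-\frac{a}{d}\lambda x^d$ for every $d$-th root of unity $\lambda$. (2) Put $\sigma(x,c)=\left(1-\frac{a}{d}x^d\right)c$ (which equals $\frac{1}{1-\lambda}\{p_1(\lambda x)-p_\lambda(\lambda x)\}c$ for every $\lambda\ne1$) and $\tau(x,c)=-\frac{a^2}{d^2}x^{2d-r}+\left(1+\frac{a}{d}x^d\right)c$. Then for every $d$-th root of unity $\lambda$, $\lambda^{1-r}x^r\sigma\!\left(\lambda^{-1}x,\lambda^{r-1}\left(c+\frac{1-\lambda}{x^r}\right)\right)=x^r\sigma(x,c)+p_1(x)-p_\lambda(x)$ and $\lambda^{1-r}x^r\tau\!\left(\lambda^{-1}x,\lambda^{r-1}\left(c+\frac{p_1(x)-p_\lambda(x)}{x^r}\right)\right)=x^r\tau(x,c)+1-\lambda$. (3) There is an isomorphism $\widetilde X(d,r)\times\mathbb{A}^1\cong\widetilde V(d,r)\times\mathbb{A}^1$.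
   Context: Work over an algebraically closed field $k$ of characteristic zero; $x,c$ are independent variables and the identities in (2) are identities of rational functions. *)

(* Defs.v *)
From HB Require Import structures.
From mathcomp Require Import all_boot all_order all_algebra.
From mathcomp Require Import fraction.
From mathcomp Require Export mpoly.
Set Implicit Arguments. Unset Strict Implicit. Unset Printing Implicit Defensive.
Import Order.TTheory GRing.Theory Num.Theory.
Local Open Scope ring_scope.

Definition is_p_lambda (k : fieldType) (d r : nat) (a lam : k) (p : {poly k}) : Prop :=
  [/\ (size p <= r)%N, p.[0] = lam & 'X^r %| (1 - p ^+ d - a *: 'X^d)].

(* The field of rational functions k(x,c): x is the inner variable, c the outer. *)
Definition RF (k : fieldType) := {fraction {poly {poly k}}}.
Definition RFx (k : fieldType) : RF k := tofrac ('X : {poly k})%:P.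
Definition RFc (k : fieldType) : RF k := tofrac ('X : {poly {poly k}}).
Definition RFpol (k : fieldType) (q : {poly k}) : RF k := tofrac q%:P.

Definition sigma (F : fieldType) (d : nat) (a x c : F) : F :=
  (1 - a / d%:R * x ^+ d) * c.
Definition tau (F : fieldType) (d r : nat) (a x c : F) : F :=
  - (a ^+ 2 / (d%:R ^+ 2)) * x ^+ (2 * d - r) + (1 + a / d%:R * x ^+ d) * c.

(* Points of A^4 = X~ x A^1 and V~ x A^1 (coordinates x,y,z,w). *)
Definition pt0 : 'I_4 := inord 0.
Definition pt1 : 'I_4 := inord 1.
Definition pt2 : 'I_4 := inord 2.
Definition inXt1 (k : ringType) (d r : nat) (a : k) (v : 'I_4 -> k) : Prop :=
  v pt0 ^+ r * v pt2 + v pt1 ^+ d + a * v pt0 ^+ d = 1.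
Definition inVt1 (k : ringType) (d r : nat) (v : 'I_4 -> k) : Prop :=
  v pt0 ^+ r * v pt2 + v pt1 ^+ d = 1.

Definition polymap (k : comRingType) (F : 'I_4 -> {mpoly k[4]}) (v : 'I_4 -> k)
  : 'I_4 -> k := fun i => (F i).@[v].

(* isomorphism of the (reduced) closed subvarieties A, B of A^4 over an
   algebraically closed field: mutually inverse polynomial maps *)
Definition iso_subvar (k : comRingType) (A B : ('I_4 -> k) -> Prop) : Prop :=
  exists F G : 'I_4 -> {mpoly k[4]},
    [/\ forall v, A v -> B (polymap F v),
        forall v, B v -> A (polymap G v),
        forall v, A v -> forall i, polymap G (polymap F v) i = v i
      & forall v, B v -> forall i, polymap F (polymap G v) i = v i].

(* Main.v *)
Require Import Defs.
From HB Require Import structures.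
From mathcomp Require Import all_boot all_order all_algebra.
From mathcomp Require Import fraction mpoly.
From mathcomp Require Import ring zify.
Import GRing.Theory.
Local Open Scope ring_scope.


Lemma binom2 (R : comPzRingType) (u : R) (n : nat) :
  exists Q : R, (1 - u) ^+ n = 1 - n%:R * u + u ^+ 2 * Q.
Proof.
elim: n => [|n [Q IH]]; first by exists 0; rewrite expr0 mulr0n mul0r; ring.
exists (n%:R + Q - u * Q); rewrite exprS IH mulrSr; ring.
Qed.

Lemma dNz (k : fieldType) (hchar : [pchar k] =i pred0) d : (0 < d)%N -> d%:R != 0 :> k.
Proof. by move=> hd; rewrite (pcharf0P _).1 // -lt0n. Qed.

Section P1.
Variables (k : fieldType) (hchar : [pchar k] =i pred0) (d r : nat).
Hypotheses (hd : (2 <= d)%N) (hdr : (d < r)%N) (hr : (r < 2 * d)%N).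
Variable a : k.

Lemma p_ok lam : lam ^+ d = 1 ->
  is_p_lambda d r a lam (lam%:P - (a / d%:R * lam) *: 'X^d).
Proof.
move=> hl; have dn : d%:R != 0 :> k by apply: dNz => //; apply: leq_trans hd.
split.
- apply: leq_trans (size_polyD _ _) _; rewrite geq_max size_polyN size_polyC.
  rewrite (leq_trans (leq_b1 _)) ?(leq_trans _ hdr) ?(leq_trans _ hd) //=.
  by apply: leq_trans (size_scale_leq _ _) _; rewrite size_polyXn.
- by rewrite !hornerE /= expr0n /= eqn0Ngt (leq_trans _ hd) //= mulr0 subr0.
- set c := a / d%:R.
  have -> : lam%:P - (c * lam) *: 'X^d = lam%:P * (1 - c%:P * 'X^d).
    by rewrite -mul_polyC rmorphM; ring.
  have [Q hQ] := @binom2 _ (c%:P * 'X^d : {poly k}) d.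
  rewrite exprMn -rmorphXn hl hQ mul1r.
  have ha : a *: 'X^d = d%:R * (c%:P * 'X^d) :> {poly k}.
    by rewrite -mul_polyC -polyC_natr mulrA -rmorphM /c mulrCA divff // mulr1.
  rewrite ha.
  have -> : 1 - (1 - d%:R * (c%:P * 'X^d) + (c%:P * 'X^d) ^+ 2 * Q) - d%:R * (c%:P * 'X^d)
     = - ((c^+2)%:P * 'X^(2*d - r) * Q) * 'X^r :> {poly k}.
    have ex : 'X^(2*d - r) * 'X^r = 'X^d * 'X^d :> {poly k}.
      by rewrite -!exprD subnK ?(ltnW hr) // mul2n -addnn.
    rewrite [RHS](_ : _ = - ((c^+2)%:P * Q) * ('X^(2*d-r) * 'X^r)); last by ring.
    rewrite ex rmorphXn; ring.
  by rewrite dvdp_mull ?dvdpp.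
Qed.

Lemma p_uniq lam p q : lam ^+ d = 1 ->
  is_p_lambda d r a lam p -> is_p_lambda d r a lam q -> p = q.
Proof.
move=> hl [sp p0 dp] [sq q0 dq].
have d0 : (0 < d)%N by apply: leq_trans hd.
have dn : d%:R != 0 :> k by apply: dNz.
have l0 : lam != 0.
  by apply/eqP => l0; move: hl; rewrite l0 expr0n gtn_eqF //= => /eqP; rewrite eq_sym oner_eq0.
have h1 : 'X^r %| p ^+ d - q ^+ d.
  have -> : p ^+ d - q ^+ d = (1 - q ^+ d - a *: 'X^d) - (1 - p ^+ d - a *: 'X^d) by ring.
  by rewrite dvdp_sub.
rewrite subrXX Gauss_dvdpl in h1; last first.
  apply: coprimep_expl; rewrite coprimep_sym coprimepX /root horner_sum.
  rewrite (eq_bigr (fun _ => lam ^+ d.-1)); last first.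
    move=> i _; rewrite !hornerE p0 q0 -exprD subnK //.
    by rewrite -ltnS prednK.
  by rewrite sumr_const card_ord -mulr_natr mulf_neq0 // expf_neq0.
apply/eqP; rewrite -subr_eq0; apply/negPn/negP => hpq.
have := dvdp_leq hpq h1; rewrite size_polyXn ltnNge.
apply/negP/negPn; apply: leq_trans (size_polyD _ _) _.
by rewrite geq_max size_polyN sp sq.
Qed.
End P1.


Lemma abstract2 (F : fieldType) (d r : nat) (x c L C : F) :
  (d < r)%N -> (r < 2 * d)%N -> d%:R != 0 :> F -> L != 0 -> x != 0 -> L ^+ d = 1 ->
     (L != 1 -> sigma d (d%:R * C) x c
        = (1 - L)^-1 * (1 - C * 1 * x ^+ d - (L - C * L * x ^+ d)) * c) /\
     (L ^+ (r - 1))^-1 * x ^+ r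
       * sigma d (d%:R * C) (L^-1 * x) (L ^+ (r - 1) * (c + (1 - L) / x ^+ r))
       = x ^+ r * sigma d (d%:R * C) x c + (1 - C * 1 * x ^+ d) - (L - C * L * x ^+ d)
     /\
     (L ^+ (r - 1))^-1 * x ^+ r
       * tau d r (d%:R * C) (L^-1 * x)
           (L ^+ (r - 1) * (c + (1 - C * 1 * x ^+ d - (L - C * L * x ^+ d)) / x ^+ r))
       = x ^+ r * tau d r (d%:R * C) x c + 1 - L.
Proof.
move=> hdr hr dF L0 x0 hLd.
have hLx : (L^-1 * x) ^+ d = x ^+ d by rewrite exprMn exprVn hLd invr1 mul1r.
have hL : L ^+ (2 * d - r) = (L ^+ (r - 1) * L)^-1.
  apply: (mulIf (mulf_neq0 (expf_neq0 (r - 1) L0) L0)).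
  rewrite mulVf ?(mulf_neq0 (expf_neq0 _ L0) L0) // mulrA -exprD -exprSr.
  by rewrite (_ : (2 * d - r + (r - 1)).+1 = d + d)%N ?exprD ?hLd ?mulr1 //; lia.
have hx : x ^+ (2 * d - r) = x ^+ d * x ^+ d / x ^+ r.
  apply: (mulIf (expf_neq0 r x0)); rewrite /= divfK ?expf_neq0 // -!exprD.
  by congr (_ ^+ _); lia.
rewrite /sigma /tau hLx [(L^-1 * x) ^+ _]exprMn exprVn hL hx.
move: (x ^+ d) (x ^+ r) (L ^+ (r - 1)) (expf_neq0 r x0) (expf_neq0 (r - 1) L0) => xd xr Lr xr0 Lr0.
split; [|split].
- move=> l1; have l1F : 1 - L != 0 by rewrite subr_eq0 eq_sym.
  field; by rewrite ?l1F ?dF ?xr0 ?Lr0 ?L0 ?oner_eq0.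
- field; by rewrite ?l1F ?dF ?xr0 ?Lr0 ?L0 ?oner_eq0.
- field; by rewrite ?l1F ?dF ?xr0 ?Lr0 ?L0 ?oner_eq0.
Qed.

Section P2.
Variables (k : fieldType) (d r : nat).
Hypotheses (hd : (2 <= d)%N) (hdr : (d < r)%N) (hr : (r < 2 * d)%N).
Hypothesis dn : d%:R != 0 :> k.
Variables (a lam : k).
Hypothesis hl : lam ^+ d = 1.

Definition phi (e : k) : RF k := tofrac (e%:P%:P).

Lemma RFpolD (p q : {poly k}) : RFpol (p + q) = RFpol p + RFpol q.
Proof. by rewrite /RFpol rmorphD tofracD. Qed.
Lemma RFpolB (p q : {poly k}) : RFpol (p - q) = RFpol p - RFpol q.
Proof. by rewrite /RFpol rmorphB tofracB. Qed.
Lemma RFpolM (p q : {poly k}) : RFpol (p * q) = RFpol p * RFpol q.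
Proof. by rewrite /RFpol rmorphM tofracM. Qed.
Lemma RFpolXn n : RFpol (k:=k) ('X^n) = RFx k ^+ n.
Proof. by rewrite /RFpol rmorphXn tofracXn. Qed.
Lemma RFpolC (e : k) : RFpol (e%:P) = phi e.
Proof. by []. Qed.
Lemma phiM e f : phi (e * f) = phi e * phi f.
Proof. by rewrite /phi !rmorphM. Qed.
Lemma phin n : phi n%:R = n%:R.
Proof. by rewrite /phi !rmorph_nat -tofracMn. Qed.

Lemma RF_dn : d%:R != 0 :> RF k.
Proof. by rewrite -phin /phi tofrac_eq0 !polyC_eq0. Qed.

Lemma phi_eq0 e : (phi e == 0) = (e == 0).
Proof. by rewrite /phi tofrac_eq0 !polyC_eq0. Qed.

Lemma RFpol_p (l e : k) : RFpol (l%:P - (e * l) *: 'X^d) = phi l - phi e * phi l * RFx k ^+ d.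
Proof. by rewrite RFpolB -mul_polyC RFpolM RFpolXn !RFpolC phiM. Qed.

Lemma comp_p (l e : k) : (l%:P - (e * l) *: 'X^d) \Po (lam *: 'X) = l%:P - (e * l) *: 'X^d.
Proof.
by rewrite comp_polyB comp_polyC comp_polyZ rmorphXn /= comp_polyX exprZn hl scale1r.
Qed.


Lemma part2 (p1 pl : {poly k}) :
  p1 = 1%:P - (a / d%:R * 1) *: 'X^d -> pl = lam%:P - (a / d%:R * lam) *: 'X^d ->
     let x := RFx k in let c := RFc k in
     let L : RF k := tofrac (lam%:P%:P) in
     let aF : RF k := tofrac (a%:P%:P) in
     (lam != 1 -> sigma d aF x c
        = (1 - L)^-1 * (RFpol (p1 \Po (lam *: 'X)) - RFpol (pl \Po (lam *: 'X))) * c)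
     /\
     (L ^+ (r - 1))^-1 * x ^+ r
       * sigma d aF (L^-1 * x) (L ^+ (r - 1) * (c + (1 - L) / x ^+ r))
       = x ^+ r * sigma d aF x c + RFpol p1 - RFpol pl
     /\
     (L ^+ (r - 1))^-1 * x ^+ r
       * tau d r aF (L^-1 * x)
           (L ^+ (r - 1) * (c + (RFpol p1 - RFpol pl) / x ^+ r))
       = x ^+ r * tau d r aF x c + 1 - L.
Proof.
move=> -> -> x c L aF.
rewrite !comp_p !RFpol_p.
have -> : phi lam = L by [].
have -> : phi 1 = 1 by rewrite /phi tofrac1.
set C := phi (a / d%:R).
have haF : aF = d%:R * C.
  by rewrite /C -phin -phiM mulrC divfK.
have d0 : (0 < d)%N by apply: leq_trans hd.
have l0 : lam != 0.
  by apply/eqP => l0; move: hl; rewrite l0 expr0n gtn_eqF //= => /eqP; rewrite eq_sym oner_eq0.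
have L0 : L != 0 by rewrite (_ : L = phi lam) // phi_eq0.
have x0 : x != 0 by rewrite /x /RFx tofrac_eq0 polyC_eq0 polyX_eq0.
have hLd : L ^+ d = 1.
  have : phi (lam ^+ d) = 1 by rewrite hl /phi tofrac1.
  by rewrite /phi !rmorphXn.
rewrite haF -/x.
have [h1 [h2 h3]] := @abstract2 _ d r x c L C hdr hr RF_dn L0 x0 hLd.
split; last by split.
move=> hl1; apply: h1.
rewrite -subr_eq0 (_ : L - 1 = phi (lam - 1)); first by rewrite phi_eq0 subr_eq0.
by rewrite /phi !rmorphB /= !polyC1 tofrac1.
Qed.
End P2.


Definition pt3 : 'I_4 := inord 3.
Lemma pt10 : (pt1 == pt0) = false. Proof. by rewrite -val_eqE /= !inordK. Qed.
Lemma pt20 : (pt2 == pt0) = false. Proof. by rewrite -val_eqE /= !inordK. Qed.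
Lemma pt30 : (pt3 == pt0) = false. Proof. by rewrite -val_eqE /= !inordK. Qed.
Lemma pt21 : (pt2 == pt1) = false. Proof. by rewrite -val_eqE /= !inordK. Qed.
Lemma pt31 : (pt3 == pt1) = false. Proof. by rewrite -val_eqE /= !inordK. Qed.
Lemma pt32 : (pt3 == pt2) = false. Proof. by rewrite -val_eqE /= !inordK. Qed.
Lemma ptcases (i : 'I_4) : [\/ i = pt0, i = pt1, i = pt2 | i = pt3].
Proof.
case: i => [[|[|[|[|n]]]] Hi] //.
- by constructor 1; apply: val_inj; rewrite /= inordK.
- by constructor 2; apply: val_inj; rewrite /= inordK.
- by constructor 3; apply: val_inj; rewrite /= inordK.
- by constructor 4; apply: val_inj; rewrite /= inordK.
Qed.

Section K.
Variables (k : fieldType) (d r : nat).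
Hypotheses (hd : (2 <= d)%N) (hdr : (d < r)%N) (hr : (r < 2 * d)%N).
Variable c : k.

Definition kY (sv x y w : k) := sv * y + x ^+ r * w.
Definition kZ (sv h x y z w : k) :=
  h + sv ^+ d * z - w * \sum_(j < d) kY sv x y w ^+ (d.-1 - j) * (sv * y) ^+ j.
Definition kW (tv x y w : k) := c ^+ 2 * x ^+ (2 * d - r) * y - tv * w.

Lemma kimg sv h x y z w K : x ^+ r * z + y ^+ d = K ->
  x ^+ r * kZ sv h x y z w + kY sv x y w ^+ d = x ^+ r * h + sv ^+ d * K.
Proof.
move=> hK; rewrite /kZ.
have e := subrXX (kY sv x y w) (sv * y) d.
have e2 : kY sv x y w - sv * y = x ^+ r * w by rewrite /kY; ring.
rewrite e2 in e.
rewrite -hK.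
have -> : kY sv x y w ^+ d = (sv ^+ d * y ^+ d) + x ^+ r * w * (\sum_(i < d) kY sv x y w ^+ (d.-1 - i) * (sv * y) ^+ i).
  by rewrite -e exprMn; ring.
ring.
Qed.

Lemma kcomp sv tv h1 h2 x y z w K1 K2 :
  sv * tv + c ^+ 2 * x ^+ (2 * d - r) * x ^+ r = 1 ->
  (x = 0 -> [/\ sv = 1, tv = 1, h1 = 0 & h2 = 0]) ->
  x ^+ r * z + y ^+ d = K1 -> x ^+ r * h1 + tv ^+ d * K1 = K2 ->
  x ^+ r * h2 + sv ^+ d * K2 = K1 ->
  [/\ kY sv x (kY tv x y w) (kW sv x y w) = y,
      kZ sv h2 x (kY tv x y w) (kZ tv h1 x y z w) (kW sv x y w) = z &
      kW tv x (kY tv x y w) (kW sv x y w) = w].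
Proof.
move=> hst h0 hK1 hK2 hK3.
set y' := kY tv x y w; set z' := kZ tv h1 x y z w; set w' := kW sv x y w.
have eY : kY sv x y' w' = y.
  rewrite /kY /y' /w' /kW /kY -[RHS]mul1r -hst; ring.
split => //; last first.
  rewrite /kW /y' /w' /kW /kY -[RHS]mul1r -hst; ring.
have [x0|x0] := eqVneq x 0.
  have [s1 t1 e1 e2] := h0 x0.
  have r0 : x ^+ r = 0 by rewrite x0 expr0n gtn_eqF //; lia.
  have yy : y' = y by rewrite /y' /kY r0 t1 mul0r addr0 mul1r.
  have ww : w' = - w.
    rewrite /w' /kW s1 mul1r x0 expr0n gtn_eqF; [idtac|lia].
    by rewrite /= mulr0n mulr0 mul0r sub0r.
  rewrite /kZ /z' /kZ yy ww e1 e2 s1 t1 /kY r0 !mul0r !addr0 !mul1r expr1n mul1r.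
  ring.
have hz' : x ^+ r * z' + y' ^+ d = K2 by rewrite /z' /y' (kimg tv h1 x y z w K1 hK1) hK2.
have := kimg sv h2 x y' z' w' K2 hz'.
by rewrite eY hK3 -hK1 => /addIr /(mulfI (expf_neq0 r x0)).
Qed.
End K.


Section M.
Variables (k : fieldType) (d r : nat).
Hypotheses (hd : (2 <= d)%N) (hdr : (d < r)%N) (hr : (r < 2 * d)%N).
Variable c : k.

Definition YM (sp : {mpoly k[4]}) := sp * 'X_pt1 + 'X_pt0 ^+ r * 'X_pt3.
Definition mk (sp sq h : {mpoly k[4]}) : 'I_4 -> {mpoly k[4]} := fun i =>
  if i == pt0 then 'X_pt0 else if i == pt1 then YM sp
  else if i == pt2 then
    h + sp ^+ d * 'X_pt2 - 'X_pt3 * \sum_(j < d) YM sp ^+ (d.-1 - j) * (sp * 'X_pt1) ^+ j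
  else (c ^+ 2)%:MP * 'X_pt0 ^+ (2 * d - r) * 'X_pt1 - sq * 'X_pt3.

Lemma evYM sp v : (YM sp).@[v] = kY _ r sp.@[v] (v pt0) (v pt1) (v pt3).
Proof. by rewrite /YM /kY !(rmorphD, rmorphM, rmorphXn) /= !mevalXU. Qed.

Lemma mk0 sp sq h v : polymap (mk sp sq h) v pt0 = v pt0.
Proof. by rewrite /polymap /mk eqxx mevalXU. Qed.
Lemma mk1 sp sq h v : polymap (mk sp sq h) v pt1 = kY _ r sp.@[v] (v pt0) (v pt1) (v pt3).
Proof. by rewrite /polymap /mk pt10 eqxx evYM. Qed.
Lemma mk2 sp sq h v : polymap (mk sp sq h) v pt2 =
  kZ _ d r sp.@[v] h.@[v] (v pt0) (v pt1) (v pt2) (v pt3).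
Proof.
rewrite /polymap /mk pt20 pt21 eqxx /kZ !(rmorphB, rmorphD, rmorphM, rmorphXn) /=.
rewrite rmorph_sum !mevalXU; congr (_ - _ * _); apply: eq_bigr => j _.
by rewrite !(rmorphM, rmorphXn) /= evYM mevalXU.
Qed.
Lemma mk3 sp sq h v : polymap (mk sp sq h) v pt3 = kW _ d r c sq.@[v] (v pt0) (v pt1) (v pt3).
Proof.
by rewrite /polymap /mk pt30 pt31 pt32 /kW !(rmorphB, rmorphM, rmorphXn) /= !mevalXU mevalC.
Qed.
End M.


Lemma part3 (k : fieldType) (d r : nat) (hd : (2 <= d)%N) (hdr : (d < r)%N)
  (hr : (r < 2 * d)%N) (a : k) (dn : d%:R != 0 :> k) :
  iso_subvar (inXt1 d r a) (inVt1 d r).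
Proof.
have [c ec] : {c : k | c = a / d%:R} by eexists.
have ha : a = d%:R * c by rewrite ec mulrC divfK.
have [u eu0] : {u : {mpoly k[4]} | u = c%:MP * 'X_pt0 ^+ d} by eexists.
have [Q hQ] := @binom2 _ u d.
have [Q' hQ'] := @binom2 _ (- u) d.
set m := (2 * d - r)%N.
have [s es0] : {s : {mpoly k[4]} | s = 1 - u} by eexists.
have [t et0] : {t : {mpoly k[4]} | t = 1 + u} by eexists.
have [A eA0] : {A : {mpoly k[4]} | A = - ((c ^+ 2)%:MP * 'X_pt0 ^+ m * Q)} by eexists.
have [B eB0] : {B : {mpoly k[4]} | B = (c ^+ 2)%:MP * 'X_pt0 ^+ m * (d%:R ^+ 2 - Q' * (1 - d%:R * u))} by eexists.
have eu w : u.@[w] = c * w pt0 ^+ d by rewrite eu0 rmorphM rmorphXn /= mevalC mevalXU.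
have es w : s.@[w] = 1 - c * w pt0 ^+ d by rewrite es0 mevalB meval1 eu.
have et w : t.@[w] = 1 + c * w pt0 ^+ d by rewrite et0 mevalD meval1 eu.
have xrm (x : k) : x ^+ m * x ^+ r = x ^+ d * x ^+ d.
  by rewrite -!exprD /m; congr (_ ^+ _); lia.
have hA w : w pt0 ^+ r * A.@[w] + s.@[w] ^+ d * 1 = 1 - a * w pt0 ^+ d.
  have := congr1 (meval w) hQ; rewrite -es0.
  rewrite !(rmorphD, rmorphB, rmorphN, rmorphM, rmorphXn, rmorph1, rmorph_nat) /= eu => ->.
  rewrite eA0 mevalN !mevalM mevalC rmorphXn /= mevalXU ha.
  set q := Q.@[w]; set x := w pt0.
  have e : x ^+ r * - (c ^+ 2 * x ^+ m * q) = - (c ^+ 2 * q * (x ^+ m * x ^+ r)) by ring.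
  rewrite e xrm; ring.
have hB w : w pt0 ^+ r * B.@[w] + t.@[w] ^+ d * (1 - a * w pt0 ^+ d) = 1.
  have := congr1 (meval w) hQ'; rewrite opprK -et0.
  rewrite !(rmorphD, rmorphB, rmorphN, rmorphM, rmorphXn, rmorph1, rmorph_nat) /= eu => ->.
  rewrite eB0 !mevalM mevalC rmorphXn /= mevalXU !(mevalB, mevalM, meval1, rmorphXn, rmorph_nat, eu) ha.
  set q := Q'.@[w]; set x := w pt0.
  have e : x ^+ r * (c ^+ 2 * x ^+ m * (d%:R ^+ 2 - q * (1 - d%:R * (c * x ^+ d))))
     = c ^+ 2 * (x ^+ m * x ^+ r) * (d%:R ^+ 2 - q * (1 - d%:R * (c * x ^+ d))) by ring.
  rewrite e xrm; ring.
have hst (x : k) : (1 - c * x ^+ d) * (1 + c * x ^+ d) + c ^+ 2 * x ^+ m * x ^+ r = 1.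
  rewrite -mulrA xrm; ring.
have d0 : (0 < d)%N by lia.
have m0 : (0 < m)%N by rewrite /m; lia.
have h0 w : w pt0 = 0 -> [/\ 1 - c * w pt0 ^+ d = 1, 1 + c * w pt0 ^+ d = 1,
                           A.@[w] = 0 & B.@[w] = 0].
  move=> x0; rewrite eA0 eB0 mevalN !mevalM !mevalC rmorphXn /= mevalXU x0 !expr0n.
  by rewrite gtn_eqF // gtn_eqF // !mulr0 !mul0r !subr0 !addr0 oppr0.
have hst2 (x : k) : (1 + c * x ^+ d) * (1 - c * x ^+ d) + c ^+ 2 * x ^+ m * x ^+ r = 1.
  rewrite -mulrA xrm; ring.
exists (mk _ d r c t s B), (mk _ d r c s t A); split.
- move=> v hv; rewrite /inVt1 mk0 mk1 mk2 (@kimg _ d r _ _ _ _ _ _ (1 - a * v pt0 ^+ d)).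
    exact: hB.
  by rewrite -hv; ring.
- move=> v hv; rewrite /inXt1 mk0 mk1 mk2 (@kimg _ d r _ _ _ _ _ _ 1 hv) hA; ring.
- move=> v hv i.
  have hK1 : v pt0 ^+ r * v pt2 + v pt1 ^+ d = 1 - a * v pt0 ^+ d by rewrite -hv; ring.
  have hA' := hA (polymap (mk _ d r c t s B) v); rewrite es mk0 in hA'.
  have hB' := hB v; rewrite et in hB'.
  have h0' : v pt0 = 0 -> [/\ 1 - c * v pt0 ^+ d = 1, 1 + c * v pt0 ^+ d = 1,
         B.@[v] = 0 & A.@[polymap (mk _ d r c t s B) v] = 0].
    move=> x0; have [? ? ? ?] := h0 v x0.
    have := h0 (polymap (mk _ d r c t s B) v); rewrite mk0 => /(_ x0) [? ? ? ?]; by split.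
  have [E1 E2 E3] := @kcomp _ _ _ hd hdr hr c (1 - c * v pt0 ^+ d) (1 + c * v pt0 ^+ d) B.@[v] A.@[polymap (mk _ d r c t s B) v] (v pt0) (v pt1) (v pt2) (v pt3) (1 - a * v pt0 ^+ d) 1 (hst (v pt0)) h0' hK1 hB' hA'.
  by case: (ptcases i) => ->; rewrite !(mk0, mk1, mk2, mk3, es, et).
- move=> v hv i.
  have hA' := hA v; rewrite es in hA'.
  have hB' := hB (polymap (mk _ d r c s t A) v); rewrite et mk0 in hB'.
  have h0' : v pt0 = 0 -> [/\ 1 + c * v pt0 ^+ d = 1, 1 - c * v pt0 ^+ d = 1,
         A.@[v] = 0 & B.@[polymap (mk _ d r c s t A) v] = 0].
    move=> x0; have [? ? ? ?] := h0 v x0.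
    have := h0 (polymap (mk _ d r c s t A) v); rewrite mk0 => /(_ x0) [? ? ? ?]; by split.
  have [E1 E2 E3] := @kcomp _ _ _ hd hdr hr c (1 + c * v pt0 ^+ d) (1 - c * v pt0 ^+ d) A.@[v] B.@[polymap (mk _ d r c s t A) v] (v pt0) (v pt1) (v pt2) (v pt3) 1 (1 - a * v pt0 ^+ d) (hst2 (v pt0)) h0' hv hA' hB'.
  by case: (ptcases i) => ->; rewrite !(mk0, mk1, mk2, mk3, es, et).
Qed.

Theorem proposition1p4p27 (k : closedFieldType) (hchar : [pchar k] =i pred0)
  (d r : nat) (hd : (2 <= d)%N) (hdr : (d < r)%N) (hr : (r < 2 * d)%N) (a : k) :
  (* (1) p_lambda = lambda - (a/d) lambda x^d *)
  (forall lam : k, lam ^+ d = 1 ->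
     is_p_lambda d r a lam (lam%:P - (a / d%:R * lam) *: 'X^d) /\
     (forall p, is_p_lambda d r a lam p -> p = lam%:P - (a / d%:R * lam) *: 'X^d))
  /\
  (* (2) *)
  (forall (lam : k) (p1 pl : {poly k}), lam ^+ d = 1 ->
     is_p_lambda d r a 1 p1 -> is_p_lambda d r a lam pl ->
     let x := RFx k in let c := RFc k in
     let L : RF k := tofrac (lam%:P%:P) in
     let aF : RF k := tofrac (a%:P%:P) in
     (lam != 1 -> sigma d aF x c
        = (1 - L)^-1 * (RFpol (p1 \Po (lam *: 'X)) - RFpol (pl \Po (lam *: 'X))) * c)
     /\
     (L ^+ (r - 1))^-1 * x ^+ r
       * sigma d aF (L^-1 * x) (L ^+ (r - 1) * (c + (1 - L) / x ^+ r))
       = x ^+ r * sigma d aF x c + RFpol p1 - RFpol pl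
     /\
     (L ^+ (r - 1))^-1 * x ^+ r
       * tau d r aF (L^-1 * x)
           (L ^+ (r - 1) * (c + (RFpol p1 - RFpol pl) / x ^+ r))
       = x ^+ r * tau d r aF x c + 1 - L)
  /\
  (* (3) X~(d,r) x A^1 is isomorphic to V~(d,r) x A^1 *)
  iso_subvar (inXt1 d r a) (inVt1 d r).
Proof.
have d0 : (0 < d)%N by apply: leq_trans hd.
have dn : d%:R != 0 :> k := @dNz _ hchar d d0.
have pok := @p_ok _ hchar d r hd hdr hr a.
have puq := @p_uniq _ hchar d r hd a.
split; [|split].
- move=> lam hl; split; first exact: (pok lam hl).
  move=> p hp; exact: (puq lam _ _ hl hp (pok lam hl)).
- move=> lam p1 pl hl h1 hpl.
  apply: (@part2 _ d r hd hdr hr dn a lam hl).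
    exact: (puq 1 _ _ (expr1n _ d) h1 (pok 1 (expr1n _ d))).
  exact: (puq lam _ _ hl hpl (pok lam hl)).
- exact: (@part3 _ d r hd hdr hr a dn).
Qed.
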